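(* Let $N=(V,E,\{\tau_{ij}\},\{u_{ij}\})$ be a temporal network with static (constant in time, not necessarily equal) integer edge lengths $\tau_{ij}$, $T$ a time horizon, and $\phi$ a cut function of a minimum $(s,0)$-$(d,T)$ cut of $\textsc{TEN}(N,T)$. Let $X_\phi=\{i:\phi(i)\in\{0,T+1\}\}$ and let $C\subseteq V\setminus X_\phi$ be such that for every $i\in C$, $\phi(i)$ does not belong to the union of $\mathcal T\cup\{\theta+\tau_{ij}:\theta\in\mathcal T,\ ij\in E\}$, $\{\phi(j)-\tau_{ij},\phi(j):ij\in E,\ j\notin C\}$ and $\{\phi(j)+\tau_{ji},\phi(j):ji\in E,\ j\notin C\}$. Then $\mathrm{cost}(\phi_C^+)=\mathrm{cost}(\phi_C^-)=\mathrm{cost}(\phi)$.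
   Context: $\textsc{TEN}(N,T)$ is the steady-state network on $V\times[0,T]$ with an edge $(i,t)\to(j,t+\tau_{ij})$ of capacity $u_{ij}(t)$ whenever $ij\in E$ and $u_{ij}(t)\ne0$, and an infinite-capacity edge $(i,t)\to(i,t+1)$ for $t\in[0,T-1]$; source $(s,0)$, sink $(d,T)$. A cut function is $\phi:V\to[0,T+1]$ with $\phi(s)=0,\phi(d)=T+1$, representing the cut with source side $\{(i,t):t\ge\phi(i)\}$; $\mathrm{cost}$ is total capacity of edges from source side to sink side. $\mathcal T=\{t:\exists ij\in E,\ u_{ij}(t)\ne u_{ij}(t-1)\}\cup\{0,T,T+1\}$. $\phi_C^\pm(i)=\phi(i)\pm1$ for $i\in C$ and $\phi_C^\pm(i)=\phi(i)$ otherwise. *)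

(* Defs.v *)
From HB Require Import structures.
From mathcomp Require Import all_boot all_order all_algebra.
Set Implicit Arguments. Unset Strict Implicit. Unset Printing Implicit Defensive.
Import Order.TTheory GRing.Theory Num.Theory.
Local Open Scope ring_scope.

(* Temporal network N = (V, E, tau, u):
   V : finType, E : {set V * V} (directed edges ij = (i,j)),
   tau : V -> V -> nat  (static integer transit times),
   u : V -> V -> nat -> R  (u i j t = capacity of ij at integer time t in [0,T]). *)

(* cost of the cut {(i,t) : t >= phi i} in TEN(N,T): total capacity of the
   edges (i,t) -> (j, t + tau_ij), 0 <= t, t + tau_ij <= T, going from the
   source side (t >= phi i) to the sink side (t + tau_ij < phi j).
   Holdover edges never cross such a cut; edges with u = 0 contribute 0. *)
Definition cost (V : finType) (R : numDomainType) (E : {set V * V})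
    (tau : V -> V -> nat) (u : V -> V -> nat -> R) (T : nat) (phi : V -> int) : R :=
  \sum_(e in E) \sum_(t < T.+1 |
      [&& phi e.1 <= (t : nat)%:Z,
          (t + tau e.1 e.2 <= T)%N &
          (t + tau e.1 e.2)%:Z < phi e.2]) u e.1 e.2 t.

Definition cut_fun (V : finType) (T : nat) (s d : V) (phi : V -> int) : Prop :=
  [/\ phi s = 0, phi d = (T.+1)%:Z & forall i, 0 <= phi i <= (T.+1)%:Z].

Definition min_cut_fun (V : finType) (R : numDomainType) (E : {set V * V})
    (tau : V -> V -> nat) (u : V -> V -> nat -> R) (T : nat) (s d : V)
    (phi : V -> int) : Prop :=
  cut_fun T s d phi /\
  forall psi, cut_fun T s d psi -> cost E tau u T phi <= cost E tau u T psi.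

(* the set calT = {t : exists ij in E, u_ij(t) <> u_ij(t-1)} u {0, T, T+1}
   (capacity changes can only be observed for t-1, t in [0,T]) *)
Definition calT (V : finType) (R : numDomainType) (E : {set V * V})
    (u : V -> V -> nat -> R) (T : nat) (x : int) : Prop :=
  x = 0 \/ x = T%:Z \/ x = (T.+1)%:Z \/
  exists t : nat, [/\ (1 <= t <= T)%N, x = t%:Z &
    exists2 e, e \in E & u e.1 e.2 t <> u e.1 e.2 t.-1].

Definition shift_plus (V : finType) (C : {set V}) (phi : V -> int) : V -> int :=
  fun i => if i \in C then phi i + 1 else phi i.
Definition shift_minus (V : finType) (C : {set V}) (phi : V -> int) : V -> int :=
  fun i => if i \in C then phi i - 1 else phi i.

Definition Xphi (V : finType) (T : nat) (phi : V -> int) : {set V} :=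
  [set i | (phi i == 0) || (phi i == (T.+1)%:Z)].

(* Main.v *)
Require Import Defs.
From HB Require Import structures.
From mathcomp Require Import all_boot all_order all_algebra.
From mathcomp Require Import zify ring lra.
Import Order.TTheory GRing.Theory Num.Theory.
Local Open Scope ring_scope.

Section Aux.
Variables (R : realDomainType) (w : nat -> R) (tau T : nat).

Definition Sm (x y : int) : R :=
  \sum_(t < T.+1 | [&& x <= (t : nat)%:Z, (t + tau <= T)%N & (t + tau)%:Z < y]) w t.

Lemma Sm_lo (x y : int) (n : nat) : x = n%:Z -> (n + tau <= T)%N ->
  (n + tau)%:Z < y -> Sm x y = w n + Sm (x + 1) y.
Proof.
move=> hx hn hy; have hnT : (n < T.+1)%N by lia.
rewrite /Sm (bigD1 (Ordinal hnT)) /=; last by rewrite hx; apply/and3P; split => //; lia.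
congr (_ + _); apply: eq_bigl => t; rewrite -val_eqE /=; lia.
Qed.

Lemma Sm_hi (x y : int) (n : nat) : y = (n + tau)%:Z -> x <= n%:Z ->
  (n + tau <= T)%N -> Sm x (y + 1) = w n + Sm x y.
Proof.
move=> hy hx hn; have hnT : (n < T.+1)%N by lia.
rewrite /Sm (bigD1 (Ordinal hnT)) /=; last by apply/and3P; split => //; lia.
congr (_ + _); apply: eq_bigl => t; rewrite -val_eqE /=; lia.
Qed.

Lemma Sm_empty (x y : int) : y <= x + (tau : nat)%:Z -> Sm x y = 0.
Proof.
move=> h; rewrite /Sm big1 // => t /and3P [h1 h2 h3]; exfalso; lia.
Qed.

Lemma case_i (x y : int) : 1 <= x -> y <= (T.+1:nat)%:Z -> x + (tau:nat)%:Z != y ->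
  (forall n : nat, x = n%:Z -> w n = w n.-1) ->
  Sm (x + 1) y + Sm (x - 1) y = Sm x y + Sm x y.
Proof.
move=> h1 hT hne hw.
have [hlt | hge] := ltP (x + (tau:nat)%:Z) y; last first.
  rewrite !Sm_empty //; lia.
have [n hn] : exists n : nat, x = n%:Z by exists `|x|%N; lia.
rewrite (Sm_lo (x - 1) y n.-1); try lia.
rewrite (_ : x - 1 + 1 = x); last lia.
rewrite (Sm_lo x y n); try lia.
rewrite (hw n hn); lra.
Qed.

Lemma case_j (x y : int) : 0 <= x -> y <= (T:nat)%:Z -> x + (tau:nat)%:Z != y ->
  (forall n : nat, y = (n + tau)%:Z -> (1 <= n)%N -> w n = w n.-1) ->
  Sm x (y + 1) + Sm x (y - 1) = Sm x y + Sm x y.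
Proof.
move=> h0 hT hne hw.
have [hlt | hge] := ltP (x + (tau:nat)%:Z) y; last first.
  rewrite !Sm_empty //; lia.
have [n hn] : exists n : nat, y = (n + tau)%:Z by exists `|y - (tau:nat)%:Z|%N; lia.
rewrite (Sm_hi x y n) //; try lia.
rewrite {3}(_ : y = (y - 1) + 1); last lia.
rewrite (Sm_hi x (y - 1) n.-1); try lia.
rewrite (hw n hn); [lra | lia].
Qed.

Lemma case_ij (x y : int) : 1 <= x -> y <= (T:nat)%:Z ->
  (forall n : nat, x = n%:Z -> w n = w n.-1) ->
  (forall n : nat, y = (n + tau)%:Z -> (1 <= n)%N -> w n = w n.-1) ->
  Sm (x + 1) (y + 1) + Sm (x - 1) (y - 1) = Sm x y + Sm x y.
Proof.
move=> h1 hT hwx hwy.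
have [hlt | hge] := ltP (x + (tau:nat)%:Z) y; last first.
  rewrite !Sm_empty //; lia.
have [n hn] : exists n : nat, x = n%:Z by exists `|x|%N; lia.
have [m hm] : exists m : nat, y = (m + tau)%:Z by exists `|y - (tau:nat)%:Z|%N; lia.
have e1 := Sm_lo x (y + 1) n hn ltac:(lia) ltac:(lia).
have e2 := Sm_hi x y m hm ltac:(lia) ltac:(lia).
have e3 := Sm_lo (x - 1) (y - 1) n.-1 ltac:(lia) ltac:(lia) ltac:(lia).
have e4 := Sm_hi x (y - 1) m.-1 ltac:(lia) ltac:(lia) ltac:(lia).
rewrite (_ : x - 1 + 1 = x) in e3; last lia.
rewrite (_ : y - 1 + 1 = y) in e4; last lia.
rewrite (hwx n hn) (hwy m hm) in e1 e2 *; last lia.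
lra.
Qed.

End Aux.
Arguments Sm {R}.

Theorem mainTheorem4 (V : finType) (R : realDomainType) (E : {set V * V})
    (tau : V -> V -> nat) (u : V -> V -> nat -> R)
    (u_ge0 : forall i j t, 0 <= u i j t)
    (T : nat) (s d : V) (phi : V -> int)
    (hphi : min_cut_fun E tau u T s d phi)
    (C : {set V})
    (hC : C \subset ~: Xphi T phi)
    (hforb : forall i, i \in C ->
       [/\ ~ calT E u T (phi i),
           ~ (exists theta, calT E u T theta /\
                exists2 e, e \in E & phi i = theta + (tau e.1 e.2)%:Z),
           (forall j, (i, j) \in E -> j \notin C ->
                phi i <> phi j - (tau i j)%:Z /\ phi i <> phi j) &
           (forall j, (j, i) \in E -> j \notin C ->
                phi i <> phi j + (tau j i)%:Z /\ phi i <> phi j)]) :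
  cost E tau u T (shift_plus C phi) = cost E tau u T phi /\
  cost E tau u T (shift_minus C phi) = cost E tau u T phi.
Proof.
case: hphi => [[hs hd hb] hmin].
have hCi : forall i, i \in C -> 1 <= phi i /\ phi i + 1 <= (T:nat)%:Z.
  move=> i iC; have := subsetP hC i iC; rewrite !inE => /norP [/eqP h0 /eqP h1].
  have [ncal _ _ _] := hforb i iC.
  have hT : phi i <> (T:nat)%:Z by move=> h; apply: ncal; right; left.
  have := hb i; move=> /andP [b1 b2]; split; lia.
have hwC : forall i, i \in C -> forall e, e \in E -> forall n : nat,
    phi i = n%:Z -> u e.1 e.2 n = u e.1 e.2 n.-1.
  move=> i iC e eE n hn; have [c1 c2] := hCi i iC.
  case: (eqVneq (u e.1 e.2 n) (u e.1 e.2 n.-1)) => // hne.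
  have [ncal _ _ _] := hforb i iC; exfalso; apply: ncal.
  right; right; right; exists n; split; [lia | done | by exists e; [|apply/eqP]].
have hwC2 : forall j, j \in C -> forall e, e \in E -> forall n : nat,
    phi j = (n + tau e.1 e.2)%:Z -> (1 <= n)%N -> u e.1 e.2 n = u e.1 e.2 n.-1.
  move=> j jC e eE n hn n1; have [c1 c2] := hCi j jC.
  case: (eqVneq (u e.1 e.2 n) (u e.1 e.2 n.-1)) => // hne.
  have [_ ncal _ _] := hforb j jC; exfalso; apply: ncal.
  exists n%:Z; split; last by exists e => //; rewrite hn; lia.
  right; right; right; exists n; split; [lia | done | by exists e; [|apply/eqP]].
have key : forall e, e \in E ->
  Sm (u e.1 e.2) (tau e.1 e.2) T (shift_plus C phi e.1) (shift_plus C phi e.2)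
  + Sm (u e.1 e.2) (tau e.1 e.2) T (shift_minus C phi e.1) (shift_minus C phi e.2)
  = Sm (u e.1 e.2) (tau e.1 e.2) T (phi e.1) (phi e.2)
  + Sm (u e.1 e.2) (tau e.1 e.2) T (phi e.1) (phi e.2).
  move=> [i j] eE /=; rewrite /shift_plus /shift_minus.
  case: (boolP (i \in C)) => iC; case: (boolP (j \in C)) => jC.
  - have [a1 a2] := hCi i iC; have [b1 b2] := hCi j jC.
    apply: case_ij; [lia | lia | exact: (hwC i iC (i, j) eE) | exact: (hwC2 j jC (i, j) eE)].
  - have [a1 a2] := hCi i iC; have [_ _ h3 _] := hforb i iC.
    have [h3' _] := h3 j eE jC.
    have := hb j => /andP [b1 b2].
    apply: case_i; [lia | lia | | exact: (hwC i iC (i, j) eE)].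
    apply/eqP => h; apply: h3'; lia.
  - have [b1 b2] := hCi j jC; have [_ _ _ h4] := hforb j jC.
    have [h4' _] := h4 i eE iC.
    have := hb i => /andP [a1 a2].
    apply: case_j; [lia | lia | | exact: (hwC2 j jC (i, j) eE)].
    apply/eqP => h; apply: h4'; lia.
  - done.
have hsum : cost E tau u T (shift_plus C phi) + cost E tau u T (shift_minus C phi)
    = cost E tau u T phi + cost E tau u T phi.
  rewrite /cost -!big_split /=; apply: eq_bigr => e eE; exact: key.
have sC : s \notin C.
  apply/negP => sC; have := subsetP hC s sC; rewrite !inE hs eqxx //.
have dC : d \notin C.
  apply/negP => dC; have := subsetP hC d dC; rewrite !inE hd eqxx orbT //.
have cp : cut_fun T s d (shift_plus C phi).
  split; rewrite /shift_plus ?(negbTE sC) ?(negbTE dC) // => i.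
  case: ifP => iC; last exact: hb.
  have [a1 a2] := hCi i iC; apply/andP; split; lia.
have cm : cut_fun T s d (shift_minus C phi).
  split; rewrite /shift_minus ?(negbTE sC) ?(negbTE dC) // => i.
  case: ifP => iC; last exact: hb.
  have [a1 a2] := hCi i iC; apply/andP; split; lia.
have l1 := hmin _ cp; have l2 := hmin _ cm.
split; lra.
Qed.
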